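(* Let $p>1$. For every $x\in(0,1)$, (1) $\displaystyle \left(1+\frac{x^p}{p(1+p)}\right)x<\arcsin_p x<\frac{\pi_p}{2}\,x$; (2) $\displaystyle \left(1+\frac{1-x^p}{p(1+p)}\right)(1-x^p)^{1/p}<\arccos_p x<\frac{\pi_p}{2}\,(1-x^p)^{1/p}$; (3) $\displaystyle \frac{\bigl(p(1+p)(1+x^p)+x^p\bigr)x}{p(1+p)(1+x^p)^{1+1/p}}<\arctan_p x<2^{1/p}\,b_p\left(\frac{x^p}{1+x^p}\right)^{1/p}$.
   Context: For $p>1$ and $x\in(0,1)$: $\arcsin_p x=\int_0^x(1-t^p)^{-1/p}\,dt$, $\arctan_p x=\int_0^x(1+t^p)^{-1}\,dt$, and $\arccos_p x=\arcsin_p\bigl((1-x^p)^{1/p}\bigr)$. Further $\pi_p=\frac{2\pi}{p\sin(\pi/p)}$ (so that $\arcsin_p(1)=\pi_p/2$), and $b_p=2^{-1/p}F\left(\frac1p,\frac1p;1+\frac1p;\frac12\right)$, where $F(a,b;c;z)=\sum_{n\ge0}\frac{(a,n)(b,n)}{(c,n)}\frac{z^n}{n!}$ is the Gaussian hypergeometric function, $(a,n)=a(a+1)\cdots(a+n-1)$, $(a,0)=1$. *)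

(* Defs.v *)
From Stdlib Require Import Reals.
From Coquelicot Require Import Coquelicot.
Open Scope R_scope.

(* real power x^y for x >= 0, with the convention 0^y = 0 (y > 0 in all uses) *)
Definition rpow (x y : R) : R := if Rle_dec x 0 then 0 else Rpower x y.

Definition arcsin_p (p x : R) : R :=
  RInt (fun t => / rpow (1 - rpow t p) (1 / p)) 0 x.

Definition arctan_p (p x : R) : R :=
  RInt (fun t => / (1 + rpow t p)) 0 x.

Definition arccos_p (p x : R) : R :=
  arcsin_p p (rpow (1 - rpow x p) (1 / p)).

Definition pi_p (p : R) : R := 2 * PI / (p * sin (PI / p)).

Fixpoint poch (a : R) (n : nat) : R :=
  match n with
  | O => 1
  | S m => poch a m * (a + INR m)
  end.

Definition hyp2F1 (a b c z : R) : R :=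
  Series (fun n => poch a n * poch b n / poch c n * z ^ n / INR (Factorial.fact n)).

Definition b_p (p : R) : R :=
  rpow 2 (- (1 / p)) * hyp2F1 (1 / p) (1 / p) (1 + 1 / p) (1 / 2).

(* Main.v *)
Require Import Defs.
From Stdlib Require Import Reals Lra Lia.
From Coquelicot Require Import Coquelicot.
Open Scope R_scope.

Ltac rq := try (match goal with |- ?x = ?y => change (@eq R x y) end).

Lemma rpow_pos x y : 0 < x -> rpow x y = Rpower x y.
Proof. intros H; unfold rpow; destruct (Rle_dec x 0); [lra|reflexivity]. Qed.

Lemma rpow_nonpos x y : x <= 0 -> rpow x y = 0.
Proof. intros H; unfold rpow; destruct (Rle_dec x 0); [reflexivity|lra]. Qed.

Lemma Rpower_gt0 x y : 0 < Rpower x y.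
Proof. unfold Rpower; apply exp_pos. Qed.

Lemma rpow_ge0 x y : 0 <= rpow x y.
Proof. unfold rpow; destruct (Rle_dec x 0). lra. left; apply Rpower_gt0. Qed.

Lemma rpow_gt0 x y : 0 < x -> 0 < rpow x y.
Proof. intros; rewrite rpow_pos; auto; apply Rpower_gt0. Qed.

Lemma rpow_plus t q r : rpow t (q + r) = rpow t q * rpow t r.
Proof.
  destruct (Rle_dec t 0). rewrite !rpow_nonpos; auto; ring.
  rewrite !rpow_pos; try lra. apply Rpower_plus.
Qed.

Lemma rpow_1 t : 0 < t -> rpow t 1 = t.
Proof. intros; rewrite rpow_pos; auto; apply Rpower_1; auto. Qed.

Lemma rpow_mult x q r : 0 < x -> rpow (rpow x q) r = rpow x (q * r).
Proof.
  intros H. rewrite (rpow_pos x q) by auto. rewrite rpow_pos by apply Rpower_gt0.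
  rewrite rpow_pos by auto. apply Rpower_mult.
Qed.

Lemma rpow_mul_t t q : t * rpow t q = rpow t (q + 1).
Proof.
  destruct (Rle_dec t 0).
  - destruct (Req_dec t 0). subst; rewrite !rpow_nonpos; lra.
    rewrite !rpow_nonpos; lra.
  - rewrite rpow_plus, rpow_1; lra.
Qed.

Lemma rpow_pow t p n : (1 <= n)%nat -> rpow t (INR n * p) = (rpow t p) ^ n.
Proof.
  intros Hn. induction n as [|n IH]. lia.
  destruct n as [|n]. simpl. rewrite Rmult_1_l; ring.
  rewrite S_INR, Rmult_plus_distr_r, Rmult_1_l, rpow_plus, IH by lia. simpl; ring.
Qed.

Lemma is_derive_rpow_pos t q : 0 < t -> is_derive (fun s => rpow s q) t (q * rpow t (q - 1)).
Proof.
  intros Ht.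
  apply is_derive_ext_loc with (f := fun s => Rpower s q).
  - exists (mkposreal t Ht). intros s Hs. cbn in Hs. unfold ball in Hs; cbn in Hs.
    unfold AbsRing_ball, abs, minus, plus, opp in Hs; cbn in Hs.
    rewrite rpow_pos; auto. apply Rabs_lt_between in Hs; lra.
  - rewrite rpow_pos by auto. apply is_derive_Reals. apply derivable_pt_lim_power; auto.
Qed.

Lemma is_derive_rpow t q : 1 < q -> is_derive (fun s => rpow s q) t (q * rpow t (q - 1)).
Proof.
  intros Hq.
  destruct (Rlt_dec 0 t) as [Ht|Ht]. now apply is_derive_rpow_pos.
  destruct (Req_dec t 0) as [H0|H0].
  - subst. rewrite (rpow_nonpos 0) by lra. rewrite Rmult_0_r.
    apply is_derive_Reals. intros eps Heps.
    assert (Hd : 0 < Rmin 1 (Rpower eps (/ (q - 1)))).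
    { apply Rmin_pos; [lra| apply Rpower_gt0]. }
    exists (mkposreal _ Hd). intros h Hh0 Hh. cbn in Hh.
    rewrite Rplus_0_l, (rpow_nonpos 0) by lra. rewrite Rminus_0_r, Rminus_0_r.
    destruct (Rle_dec h 0).
    + rewrite rpow_nonpos by auto. unfold Rdiv; rewrite Rmult_0_l, Rabs_R0; auto.
    + assert (Hh1 : h < Rpower eps (/ (q - 1))).
      { apply Rle_lt_trans with (Rabs h). apply RRle_abs. eapply Rlt_le_trans; [apply Hh|apply Rmin_r]. }
      rewrite rpow_pos by lra.
      replace (Rpower h q / h) with (Rpower h (q - 1)).
      2:{ replace q with ((q - 1) + 1) at 2 by ring. rewrite Rpower_plus, Rpower_1 by lra. field; lra. }
      rewrite Rabs_pos_eq by (left; apply Rpower_gt0).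
      replace eps with (Rpower (Rpower eps (/ (q - 1))) (q - 1)).
      2:{ rewrite Rpower_mult. replace (/ (q - 1) * (q - 1)) with 1 by (field; lra). apply Rpower_1; auto. }
      apply Rlt_Rpower_l; lra.
  - apply is_derive_ext_loc with (f := fun _ => 0).
    + assert (Hp : 0 < - t) by lra. exists (mkposreal _ Hp). intros s Hs.
      unfold ball in Hs; cbn in Hs. unfold AbsRing_ball, abs, minus, plus, opp in Hs; cbn in Hs.
      apply Rabs_lt_between in Hs. rewrite rpow_nonpos; lra.
    + rewrite (rpow_nonpos t) by lra. rewrite Rmult_0_r. apply (is_derive_const (K:=R_AbsRing) (0:R)).
Qed.

Lemma continuous_rpow t q : 1 < q -> continuous (fun s => rpow s q) t.
Proof. intros. apply (ex_derive_continuous (K:=R_AbsRing) (V:=R_NormedModule)). eexists; apply is_derive_rpow; auto. Qed.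

Lemma is_derive_mul_R (f g : R -> R) x df dg :
  is_derive f x df -> is_derive g x dg -> is_derive (fun t => f t * g t) x (df * g x + f x * dg).
Proof. intros H1 H2. apply (is_derive_mult f g x df dg H1 H2). intros; apply Rmult_comm. Qed.

Lemma is_derive_comp_R (f g : R -> R) x df dg :
  is_derive f (g x) df -> is_derive g x dg -> is_derive (fun t => f (g t)) x (df * dg).
Proof. intros H1 H2. rewrite Rmult_comm. apply (is_derive_comp f g x df dg H1 H2). Qed.

Lemma is_derive_eq (f : R -> R) x l l' : is_derive f x l -> l = l' -> is_derive f x l'.
Proof. intros H ->; auto. Qed.

Lemma is_derive_plus_R (f g : R -> R) x df dg :
  is_derive f x df -> is_derive g x dg -> is_derive (fun t => f t + g t) x (df + dg).
Proof. intros H1 H2. apply (is_derive_plus f g x df dg H1 H2). Qed.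

Lemma is_derive_id_R x : is_derive (fun t : R => t) x 1.
Proof. apply (is_derive_id (K:=R_AbsRing)). Qed.

Lemma is_derive_const_R (c : R) x : is_derive (fun _ : R => c) x 0.
Proof. apply (is_derive_const (K:=R_AbsRing) c). Qed.

Lemma continuous_of_derive (f : R -> R) x l : is_derive f x l -> continuous f x.
Proof. intros H. apply (ex_derive_continuous (K:=R_AbsRing) (V:=R_NormedModule)). eexists; eauto. Qed.

Lemma const_of_derive0 (f : R -> R) a b :
  (forall x, Rmin a b <= x <= Rmax a b -> is_derive f x 0) -> f b = f a.
Proof.
  intros H. assert (Hi := is_RInt_derive f (fun _ => 0) a b H).
  assert (Hc := is_RInt_const a b 0).
  specialize (Hi (fun x _ => continuous_const (0:R) x)).
  pose proof (is_RInt_unique _ _ _ _ Hi) as E1.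
  pose proof (is_RInt_unique _ _ _ _ Hc) as E2.
  rewrite E1 in E2. unfold minus, plus, opp, scal in E2; simpl in E2.
  unfold mult in E2; simpl in E2. lra.
Qed.

Definition gco (a : R) (n : nat) : R := poch a n / INR (Factorial.fact n).
Definition cco (a : R) (n : nat) : R := poch a n * poch a n / poch (1 + a) n / INR (Factorial.fact n).

Lemma INR_fact_pos n : 0 < INR (Factorial.fact n).
Proof. apply lt_0_INR. apply Factorial.lt_O_fact. Qed.

Lemma poch_pos a n : 0 < a -> 0 < poch a n.
Proof.
  intros Ha; induction n; simpl. lra.
  apply Rmult_lt_0_compat; auto. pose proof (pos_INR n); lra.
Qed.

Lemma poch_ratio a n : poch (1 + a) n * a = poch a n * (a + INR n).
Proof.
  induction n. simpl; ring. cbn [poch].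
  replace (poch (1 + a) n * (1 + a + INR n) * a) with (poch (1 + a) n * a * (1 + a + INR n)) by ring.
  rewrite IHn. rewrite S_INR. ring.
Qed.

Section Coefs.
Variable a : R.
Hypothesis Ha : 0 < a < 1.

Lemma gco_S n : gco a (S n) = gco a n * (a + INR n) / INR (S n).
Proof.
  unfold gco. cbn [poch]. rewrite fact_simpl, mult_INR.
  pose proof (INR_fact_pos n). assert (0 < INR (S n)) by (apply lt_0_INR; lia).
  field; lra.
Qed.

Lemma gco_0 : gco a 0 = 1.
Proof. unfold gco; simpl; field. Qed.

Lemma gco_bounds n : 0 < gco a n <= 1.
Proof.
  induction n. rewrite gco_0; lra.
  rewrite gco_S. rewrite S_INR. pose proof (pos_INR n).
  split.
  - apply Rdiv_lt_0_compat; [apply Rmult_lt_0_compat|]; lra.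
  - unfold Rdiv. rewrite Rmult_assoc. rewrite <- (Rmult_1_r 1).
    apply Rmult_le_compat; try lra.
    apply Rmult_le_pos; [lra| left; apply Rinv_0_lt_compat; lra].
    apply Rmult_le_reg_r with (INR n + 1). lra.
    field_simplify; lra.
Qed.

Lemma cco_eq n : cco a n = gco a n * a / (a + INR n).
Proof.
  unfold cco, gco. pose proof (poch_ratio a n). pose proof (pos_INR n).
  pose proof (INR_fact_pos n). pose proof (poch_pos (1 + a) n ltac:(lra)).
  assert (poch a n = poch (1 + a) n * a / (a + INR n)) as E.
  { rewrite H. field. lra. }
  rewrite E at 2. field. repeat split; lra.
Qed.

Lemma cco_bounds n : 0 < cco a n <= 1.
Proof.
  rewrite cco_eq. pose proof (gco_bounds n). pose proof (pos_INR n).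
  split. apply Rdiv_lt_0_compat; [apply Rmult_lt_0_compat|]; lra.
  unfold Rdiv. rewrite Rmult_assoc. rewrite <- (Rmult_1_r 1).
  apply Rmult_le_compat; try lra.
  apply Rmult_le_pos; [lra| left; apply Rinv_0_lt_compat; lra].
  apply Rmult_le_reg_r with (a + INR n). lra.
  field_simplify; lra.
Qed.

Lemma cco_0 : cco a 0 = 1.
Proof. rewrite cco_eq, gco_0. simpl. field. lra. Qed.

Lemma cco_1 : cco a 1 = a * a / (1 + a).
Proof.
  rewrite cco_eq. rewrite (gco_S 0), gco_0. simpl. field. lra.
Qed.

Lemma cco_g n : cco a n + / a * (INR n * cco a n) = gco a n.
Proof. rewrite cco_eq. pose proof (pos_INR n). field. lra. Qed.

End Coefs.

Lemma radius_ge1 (c : nat -> R) : (forall n, Rabs (c n) <= 1) -> Rbar_le 1 (CV_radius c).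
Proof.
  intros Hc. destruct (CV_radius_bounded c) as [Hub _]. apply Hub.
  exists 1. intros n. rewrite pow1, Rmult_1_r. auto.
Qed.

Lemma radius_inside (c : nat -> R) z : (forall n, Rabs (c n) <= 1) -> Rabs z < 1 ->
  Rbar_lt (Rabs z) (CV_radius c).
Proof.
  intros Hc Hz. eapply Rbar_lt_le_trans; [|apply radius_ge1; auto]. simpl; auto.
Qed.

Lemma xPSeries_derive (c : nat -> R) z :
  z * PSeries (PS_derive c) z = PSeries (fun n => INR n * c n) z.
Proof.
  rewrite <- PSeries_incr_1. apply PSeries_ext. intros [|n]; simpl.
  rewrite Rmult_0_l. reflexivity.
  unfold PS_derive. reflexivity.
Qed.

Lemma radius_nc (c : nat -> R) : CV_radius (fun n => INR n * c n) = CV_radius c.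
Proof.
  rewrite <- (CV_radius_derive c), <- (CV_radius_incr_1 (PS_derive c)).
  apply CV_radius_ext. intros [|n]; simpl. rewrite Rmult_0_l. reflexivity. unfold PS_derive. reflexivity.
Qed.

Definition Fs a z := PSeries (cco a) z.
Definition Gs a z := PSeries (gco a) z.

Section Ser.
Variable a : R.
Hypothesis Ha : 0 < a < 1.

Lemma abs_cco n : Rabs (cco a n) <= 1.
Proof. destruct (cco_bounds a Ha n). rewrite Rabs_pos_eq; lra. Qed.
Lemma abs_gco n : Rabs (gco a n) <= 1.
Proof. destruct (gco_bounds a Ha n). rewrite Rabs_pos_eq; lra. Qed.

Lemma ex_F z : Rabs z < 1 -> ex_pseries (cco a) z.
Proof. intros; apply CV_radius_inside, radius_inside; auto; apply abs_cco. Qed.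
Lemma ex_G z : Rabs z < 1 -> ex_pseries (gco a) z.
Proof. intros; apply CV_radius_inside, radius_inside; auto; apply abs_gco. Qed.

Lemma derive_F z : Rabs z < 1 -> is_derive (Fs a) z (PSeries (PS_derive (cco a)) z).
Proof. intros; apply is_derive_PSeries, radius_inside; auto; apply abs_cco. Qed.
Lemma derive_G z : Rabs z < 1 -> is_derive (Gs a) z (PSeries (PS_derive (gco a)) z).
Proof. intros; apply is_derive_PSeries, radius_inside; auto; apply abs_gco. Qed.

Lemma serE1 z : Rabs z < 1 -> Fs a z + / a * (z * PSeries (PS_derive (cco a)) z) = Gs a z.
Proof.
  intros Hz. rewrite xPSeries_derive.
  rewrite <- (PSeries_scal (/ a)).
  unfold Fs. rewrite <- PSeries_plus.
  - unfold Gs. apply PSeries_ext. intros n. unfold PS_plus, PS_scal, plus, scal; simpl.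
    unfold mult; simpl. apply cco_g. lra.
  - apply ex_F; auto.
  - apply ex_pseries_scal. apply Rmult_comm. apply CV_radius_inside. rewrite radius_nc. apply radius_inside; auto; apply abs_cco.
Qed.

Lemma serE2 z : Rabs z < 1 -> PSeries (PS_derive (gco a)) z - z * PSeries (PS_derive (gco a)) z = a * Gs a z.
Proof.
  intros Hz. rewrite xPSeries_derive. rewrite <- PSeries_minus.
  - unfold Gs. rewrite <- PSeries_scal. apply PSeries_ext. intros n.
    unfold PS_minus, PS_scal, PS_derive. rewrite gco_S by auto. rewrite S_INR.
    pose proof (pos_INR n). unfold plus, opp, scal; simpl. unfold mult; simpl. field. lra.
  - apply CV_radius_inside. rewrite CV_radius_derive. apply radius_inside; auto; apply abs_gco.
  - apply CV_radius_inside. rewrite radius_nc. apply radius_inside; auto; apply abs_gco.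
Qed.

Lemma is_derive_Rpower_R x y : 0 < x -> is_derive (fun s => Rpower s y) x (y * Rpower x (y - 1)).
Proof. intros; apply is_derive_Reals, derivable_pt_lim_power; auto. Qed.

Lemma serE3 z : 0 <= z < 1 -> Gs a z * Rpower (1 - z) a = 1.
Proof.
  intros Hz.
  assert (H : (fun s => Gs a s * Rpower (1 - s) a) z = (fun s => Gs a s * Rpower (1 - s) a) 0).
  { apply (const_of_derive0 (fun s => Gs a s * Rpower (1 - s) a) 0 z). intros s Hs.
    rewrite Rmin_left, Rmax_right in Hs by lra.
    assert (Hs1 : Rabs s < 1) by (rewrite Rabs_pos_eq; lra).
    eapply is_derive_eq.
    - apply is_derive_mul_R. apply derive_G; auto.
      apply (is_derive_comp_R (fun u => Rpower u a) (fun s => 1 - s)).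
      apply is_derive_Rpower_R; lra.
      apply (is_derive_minus (K:=R_AbsRing) (fun _ => 1) (fun s => s) s 0 1).
      apply is_derive_const_R. apply is_derive_id_R.
    - pose proof (serE2 s Hs1) as HE.
      unfold minus, plus, opp; simpl.
      replace (Rpower (1 - s) a) with ((1 - s) * Rpower (1 - s) (a - 1)).
      2:{ replace a with ((a - 1) + 1) at 2 by ring. rewrite Rpower_plus, Rpower_1 by lra. ring. }
      replace (PSeries (PS_derive (gco a)) s * ((1 - s) * Rpower (1 - s) (a - 1)))
        with ((PSeries (PS_derive (gco a)) s - s * PSeries (PS_derive (gco a)) s) * Rpower (1 - s) (a - 1)) by ring.
      rewrite HE. ring. }
  simpl in H. rewrite H. unfold Gs. rewrite PSeries_0, gco_0 by auto.
  rewrite Rminus_0_r. unfold Rpower. rewrite ln_1, Rmult_0_r, exp_0. ring.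
Qed.

End Ser.

Lemma rpow_le_compat s t q : 0 <= s <= t -> 0 < q -> rpow s q <= rpow t q.
Proof.
  intros Hs Hq. destruct (Req_dec s 0).
  - subst. rewrite rpow_nonpos by lra. apply rpow_ge0.
  - rewrite !rpow_pos by lra. apply Rle_Rpower_l; lra.
Qed.

Lemma rpow_lt_compat s t q : 0 <= s < t -> 0 < q -> rpow s q < rpow t q.
Proof.
  intros Hs Hq. destruct (Req_dec s 0).
  - subst. rewrite rpow_nonpos by lra. apply rpow_gt0; lra.
  - rewrite !rpow_pos by lra. apply Rlt_Rpower_l; lra.
Qed.

Lemma rpow_lt1 t q : 0 <= t < 1 -> 0 < q -> rpow t q < 1.
Proof.
  intros. replace 1 with (rpow 1 q). apply rpow_lt_compat; lra.
  rewrite rpow_pos by lra. unfold Rpower. rewrite ln_1, Rmult_0_r, exp_0; auto.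
Qed.

Section Main.
Variable p : R.
Hypothesis Hp : 1 < p.

Let a := 1 / p.
Lemma Ha : 0 < a < 1.
Proof. unfold a. split. apply Rdiv_lt_0_compat; lra.
  apply Rmult_lt_reg_r with p. lra. field_simplify; lra. Qed.
Lemma Hpa : / a = p.
Proof. unfold a. field. lra. Qed.

Lemma arcsin_formula x : 0 <= x < 1 -> arcsin_p p x = x * Fs a (rpow x p).
Proof.
  intros Hx. pose proof Ha as Ha'.
  assert (Hu : forall t, 0 <= t <= x -> 0 <= rpow t p < 1).
  { intros t Ht. split. apply rpow_ge0. apply Rle_lt_trans with (rpow x p).
    apply rpow_le_compat; lra. apply rpow_lt1; lra. }
  assert (HD : forall t, 0 <= t <= x ->
    is_derive (fun s => s * Fs a (rpow s p)) t (Gs a (rpow t p))).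
  { intros t Ht. destruct (Hu t Ht) as [Hu0 Hu1].
    assert (Hu' : Rabs (rpow t p) < 1) by (rewrite Rabs_pos_eq; lra).
    eapply is_derive_eq.
    - apply is_derive_mul_R. apply is_derive_id_R.
      apply (is_derive_comp_R (Fs a) (fun s => rpow s p)).
      apply derive_F; auto. apply is_derive_rpow; auto.
    - rewrite <- (serE1 a Ha' (rpow t p) Hu'). rewrite Hpa.
      assert (Ht' : t * rpow t (p - 1) = rpow t p) by (rewrite rpow_mul_t; f_equal; ring).
      set (X := PSeries (PS_derive (cco a)) (rpow t p)).
      replace (t * (X * (p * rpow t (p - 1)))) with (p * ((t * rpow t (p - 1)) * X)) by ring.
      rewrite Ht'. change (?x = ?y) with (@eq R x y). ring. }
  assert (HC : forall t, 0 <= t <= x -> continuous (fun s => Gs a (rpow s p)) t).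
  { intros t Ht. destruct (Hu t Ht) as [Hu0 Hu1].
    assert (Hu' : Rabs (rpow t p) < 1) by (rewrite Rabs_pos_eq; lra).
    eapply continuous_of_derive.
    apply (is_derive_comp_R (Gs a) (fun s => rpow s p)).
    apply derive_G; auto. apply is_derive_rpow; auto. }
  pose proof (is_RInt_derive (fun s => s * Fs a (rpow s p)) (fun s => Gs a (rpow s p)) 0 x) as HI.
  rewrite Rmin_left, Rmax_right in HI by lra.
  specialize (HI HD HC).
  assert (HI2 : is_RInt (fun s => Gs a (rpow s p)) 0 x (x * Fs a (rpow x p))).
  { match type of HI with is_RInt _ _ _ ?l => replace (x * Fs a (rpow x p)) with l; [exact HI|] end.
    unfold minus, plus, opp; simpl. ring. }
  clear HI; rename HI2 into HI.
  unfold arcsin_p. apply is_RInt_unique.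
  eapply is_RInt_ext; [|apply HI].
  - intros t Ht. rewrite Rmin_left, Rmax_right in Ht by lra.
    destruct (Hu t ltac:(lra)) as [Hu0 Hu1].
    rewrite (rpow_pos (1 - rpow t p)) by lra. fold a.
    pose proof (serE3 a Ha' (rpow t p) (conj Hu0 Hu1)) as HE.
    assert (0 < Rpower (1 - rpow t p) a) by apply Rpower_gt0.
    apply Rmult_eq_reg_r with (Rpower (1 - rpow t p) a). rewrite HE. field. lra. lra.
Qed.

Lemma is_derive_inv_R v : v <> 0 -> is_derive (fun s => / s) v (- / (v * v)).
Proof. intros H. auto_derive. auto. field. auto. Qed.

Lemma is_derive_frac v : 0 <= v -> is_derive (fun s => s / (1 + s)) v (/ ((1 + v) * (1 + v))).
Proof. intros H. auto_derive. lra. field. lra. Qed.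

Lemma arctan_formula x : 0 <= x ->
  arctan_p p x = x * Rpower (1 + rpow x p) (- a) * Fs a (rpow x p / (1 + rpow x p)).
Proof.
  intros Hx. pose proof Ha as Ha'.
  assert (HD : forall t, 0 <= t <= x ->
    is_derive (fun s => (s * Rpower (1 + rpow s p) (- a)) * Fs a (rpow s p / (1 + rpow s p))) t
      (/ (1 + rpow t p))).
  { intros t Ht. pose proof (rpow_ge0 t p) as HU.
    assert (Hz : Rabs (rpow t p / (1 + rpow t p)) < 1).
    { rewrite Rabs_pos_eq. apply Rmult_lt_reg_r with (1 + rpow t p). lra.
      field_simplify; lra. apply Rdiv_le_0_compat; lra. }
    eapply is_derive_eq.
    - apply is_derive_mul_R.
      + apply is_derive_mul_R. apply is_derive_id_R.
        apply (is_derive_comp_R (fun v => Rpower v (- a)) (fun s => 1 + rpow s p)).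
        apply is_derive_Rpower_R; lra.
        apply is_derive_plus_R. apply is_derive_const_R. apply is_derive_rpow; auto.
      + apply (is_derive_comp_R (Fs a) (fun s => rpow s p / (1 + rpow s p))).
        apply derive_F; auto.
        apply (is_derive_comp_R (fun v => v / (1 + v)) (fun s => rpow s p)).
        apply is_derive_frac; auto. apply is_derive_rpow; auto.
    - cbv beta. change (?x = ?y) with (@eq R x y).
      assert (tR1 : t * rpow t (p - 1) = rpow t p) by (rewrite rpow_mul_t; f_equal; ring).
      set (U := rpow t p) in *. set (R1 := rpow t (p - 1)) in *.
      set (W := Rpower (1 + U) (- a)).
      assert (HW0 : 0 < W) by apply Rpower_gt0.
      assert (HW1 : Rpower (1 + U) (- a - 1) = W / (1 + U)).
      { unfold W. unfold Rminus. rewrite Rpower_plus, (Rpower_Ropp _ 1), Rpower_1 by lra. field. lra. }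
      set (F1 := PSeries (PS_derive (cco a)) (U / (1 + U))).
      assert (HF0 : Fs a (U / (1 + U)) = / W - p * (U / (1 + U)) * F1).
      { pose proof (serE1 a Ha' _ Hz) as HE1. rewrite Hpa in HE1. fold F1 in HE1.
        assert (HG : Gs a (U / (1 + U)) = / W).
        { assert (Hz' : 0 <= U / (1 + U) < 1).
          { split. apply Rdiv_le_0_compat; lra. apply Rmult_lt_reg_r with (1 + U). lra. field_simplify; lra. }
          pose proof (serE3 a Ha' _ Hz') as HE3.
          replace (1 - U / (1 + U)) with (/ (1 + U)) in HE3 by (field; lra).
          assert (HR : Rpower (/ (1 + U)) a * Rpower (1 + U) a = 1).
          { rewrite Rpower_mult_distr. rewrite Rinv_l by lra. unfold Rpower. rewrite ln_1, Rmult_0_r, exp_0; auto.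
            apply Rinv_0_lt_compat; lra. lra. }
          unfold W. rewrite Rpower_Ropp, Rinv_inv.
          assert (0 < Rpower (/ (1 + U)) a) by apply Rpower_gt0.
          apply Rmult_eq_reg_r with (Rpower (/ (1 + U)) a). rewrite HE3. rewrite Rmult_comm, HR. reflexivity. lra. }
        rewrite <- HG, <- HE1. ring. }
      fold U W. rewrite HW1, HF0. clearbody U R1 W F1. rewrite <- tR1. unfold a.
      assert (0 <= t * R1) by lra. field. repeat split; lra. }
  assert (HC : forall t, 0 <= t <= x -> continuous (fun s => / (1 + rpow s p)) t).
  { intros t Ht. pose proof (rpow_ge0 t p) as HU.
    eapply continuous_of_derive.
    apply (is_derive_comp_R (fun v => / v) (fun s => 1 + rpow s p)).
    apply is_derive_inv_R; lra.
    apply is_derive_plus_R. apply is_derive_const_R. apply is_derive_rpow; auto. }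
  pose proof (is_RInt_derive (fun s => (s * Rpower (1 + rpow s p) (- a)) * Fs a (rpow s p / (1 + rpow s p))) (fun s => / (1 + rpow s p)) 0 x) as HI.
  rewrite Rmin_left, Rmax_right in HI by lra.
  specialize (HI HD HC).
  unfold arctan_p. apply is_RInt_unique.
  match type of HI with is_RInt _ _ _ ?l => replace (x * Rpower (1 + rpow x p) (- a) * Fs a (rpow x p / (1 + rpow x p))) with l; [exact HI|] end.
  unfold minus, plus, opp; simpl. ring.
Qed.

End Main.

Lemma Series_nonneg (u : nat -> R) : (forall n, 0 <= u n) -> ex_series u -> 0 <= Series u.
Proof.
  intros H Hex. assert (E := Series_le (fun n => 0 * u n) u).
  rewrite Series_scal_l in E. rewrite Rmult_0_l in E. apply E; auto. intros n; split; [lra|auto]. rewrite Rmult_0_l; auto.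
Qed.

Section Mono.
Variable a : R.
Hypothesis Ha : 0 < a < 1.

Lemma Fs_lower z : 0 < z < 1 -> 1 + a * a / (1 + a) * z < Fs a z.
Proof.
  intros Hz. assert (Hz' : Rabs z < 1) by (rewrite Rabs_pos_eq; lra).
  pose proof (ex_F a Ha z Hz') as Hex. apply ex_pseries_R in Hex.
  unfold Fs, PSeries. rewrite (Series_incr_1 _ Hex).
  apply ex_series_incr_1 in Hex. rewrite (Series_incr_1 _ Hex).
  apply ex_series_incr_1 in Hex. rewrite (Series_incr_1 _ Hex).
  apply ex_series_incr_1 in Hex.
  pose proof (Series_nonneg _ (fun n => Rmult_le_pos _ _ (Rlt_le _ _ (proj1 (cco_bounds a Ha _))) (pow_le z _ (Rlt_le _ _ (proj1 Hz)))) Hex).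
  rewrite cco_0, cco_1 by auto.
  pose proof (cco_bounds a Ha 2). simpl pow in *.
  assert (0 < cco a 2 * (z * (z * 1))) by (apply Rmult_lt_0_compat; [lra| nra]).
  lra.
Qed.

Lemma Fs_incr z1 z2 : 0 <= z1 < z2 -> z2 < 1 -> Fs a z1 < Fs a z2.
Proof.
  intros H1 H2.
  assert (Hz1 : Rabs z1 < 1) by (rewrite Rabs_pos_eq; lra).
  assert (Hz2 : Rabs z2 < 1) by (rewrite Rabs_pos_eq; lra).
  pose proof (ex_F a Ha z1 Hz1) as E1. pose proof (ex_F a Ha z2 Hz2) as E2.
  apply ex_pseries_R in E1. apply ex_pseries_R in E2.
  apply Rminus_gt_0_lt. unfold Fs, PSeries. rewrite <- Series_minus by auto.
  assert (Hex : ex_series (fun n => cco a n * z2 ^ n - cco a n * z1 ^ n)) by apply (ex_series_minus _ _ E2 E1).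
  rewrite (Series_incr_1 _ Hex). apply ex_series_incr_1 in Hex.
  rewrite (Series_incr_1 _ Hex). apply ex_series_incr_1 in Hex.
  assert (Hn : forall n, 0 <= cco a n * z2 ^ n - cco a n * z1 ^ n).
  { intros n. pose proof (cco_bounds a Ha n). rewrite <- Rmult_minus_distr_l.
    apply Rmult_le_pos. lra. apply Rge_le, Rge_minus, Rle_ge, pow_incr; lra. }
  pose proof (Series_nonneg _ (fun n => Hn (S (S n))) Hex).
  pose proof (cco_bounds a Ha 1). simpl pow. 
  assert (0 < cco a 1 * (z2 * 1) - cco a 1 * (z1 * 1)) by nra.
  assert (cco a 0 * 1 - cco a 0 * 1 = 0) by ring. simpl in *. lra.
Qed.

End Mono.

Section Assembly.
Variable p : R.
Hypothesis Hp : 1 < p.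
Hypothesis S7 : forall Y, 0 <= Y -> arctan_p p Y <= PI / (p * sin (PI / p)).

Let a := 1 / p.
Let P := PI / (p * sin (PI / p)).

Lemma Ha2 : 0 < a < 1.
Proof. apply (Ha p Hp). Qed.

Lemma Rpower_1_base y : Rpower 1 y = 1.
Proof. unfold Rpower. rewrite ln_1, Rmult_0_r, exp_0; auto. Qed.

Lemma rpow_inv_p x : 0 < x -> rpow (rpow x a) p = x.
Proof. intros; rewrite rpow_mult by auto. unfold a. replace (1 / p * p) with 1 by (field; lra). apply rpow_1; auto. Qed.

Lemma rpow_inv_p' x : 0 < x -> rpow (rpow x p) a = x.
Proof. intros; rewrite rpow_mult by auto. unfold a. replace (p * (1 / p)) with 1 by (field; lra). apply rpow_1; auto. Qed.

Lemma key_bound x : 0 < x < 1 -> x * Fs a (rpow x p) <= P.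
Proof.
  intros Hx. pose proof Ha2 as Ha'.
  set (u := rpow x p).
  assert (Hu : 0 < u < 1) by (split; [apply rpow_gt0; lra| apply rpow_lt1; lra]).
  set (R := Rpower (1 - u) (- a)).
  assert (HR : 0 < R) by apply Rpower_gt0.
  set (y := x * R).
  assert (Hy : 0 < y) by (apply Rmult_lt_0_compat; lra).
  pose proof (arctan_formula p Hp y (Rlt_le _ _ Hy)) as HA. fold a in HA.
  assert (Hyp : rpow y p = u / (1 - u)).
  { unfold y. rewrite rpow_pos by auto. rewrite <- Rpower_mult_distr by lra.
    unfold R. rewrite Rpower_mult. replace (- a * p) with (- (1)) by (unfold a; field; lra).
    rewrite Rpower_Ropp, Rpower_1 by lra. replace (Rpower x p) with u by (unfold u; rewrite rpow_pos; lra). field. lra. }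
  rewrite Hyp in HA.
  replace (u / (1 - u) / (1 + u / (1 - u))) with u in HA by (field; lra).
  replace (1 + u / (1 - u)) with (/ (1 - u)) in HA by (field; lra).
  assert (Hq : y * Rpower (/ (1 - u)) (- a) = x).
  { unfold y, R. rewrite Rmult_assoc. rewrite Rpower_mult_distr by (try apply Rinv_0_lt_compat; lra).
    rewrite Rinv_r by lra. rewrite Rpower_1_base. ring. }
  rewrite Hq in HA. rewrite <- HA. apply S7. lra.
Qed.

Lemma F_upper u : 0 < u < 1 -> Fs a u < P.
Proof.
  intros Hu. pose proof Ha2 as Ha'.
  set (u2 := (1 + u) / 2).
  assert (Hu2 : u < u2 < 1) by (unfold u2; lra).
  pose proof (Fs_incr a Ha' u u2 ltac:(lra) ltac:(lra)) as Hinc.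
  set (d := Fs a u2 - Fs a u).
  pose proof (Fs_lower a Ha' u ltac:(lra)) as Hlow.
  assert (HFpos : 0 < Fs a u).
  { assert (0 <= a * a / (1 + a) * u). apply Rmult_le_pos; [|lra].
    apply Rdiv_le_0_compat; nra. lra. }
  destruct (Rlt_le_dec (Fs a u) P) as [H|H]; auto. exfalso.
  set (q := Fs a u / (Fs a u + d)).
  assert (Hq : q < 1). { unfold q. apply Rmult_lt_reg_r with (Fs a u + d). unfold d; lra.
    field_simplify; unfold d; lra. }
  assert (Hq0 : 0 < q) by (unfold q; apply Rdiv_lt_0_compat; unfold d; lra).
  set (x' := Rmax (rpow u2 a) ((1 + q) / 2)).
  assert (Hx'1 : x' < 1). { unfold x'. apply Rmax_lub_lt. apply rpow_lt1; lra. lra. }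
  assert (Hx'0 : 0 < x'). { unfold x'. eapply Rlt_le_trans; [|apply Rmax_r]. lra. }
  assert (Hx'u : u2 <= rpow x' p).
  { rewrite <- (rpow_inv_p u2) at 1 by lra. apply rpow_le_compat; [|lra].
    split. apply rpow_ge0. apply Rmax_l. }
  assert (Hx'p : rpow x' p < 1) by (apply rpow_lt1; lra).
  assert (HF2 : Fs a u + d <= Fs a (rpow x' p)).
  { unfold d. destruct (Req_dec u2 (rpow x' p)) as [E|E]. rewrite E; lra.
    pose proof (Fs_incr a Ha' u2 (rpow x' p) ltac:(lra) Hx'p). lra. }
  pose proof (key_bound x' ltac:(lra)) as HK.
  assert (x' * (Fs a u + d) <= Fs a u).
  { apply Rle_trans with (x' * Fs a (rpow x' p)). apply Rmult_le_compat_l; lra. lra. }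
  assert (x' <= q). { unfold q. apply Rmult_le_reg_r with (Fs a u + d). unfold d; lra.
    field_simplify. lra. unfold d; lra. }
  assert ((1 + q) / 2 <= x') by (unfold x'; apply Rmax_r). lra.
Qed.

Lemma pi_p_half : pi_p p / 2 = P.
Proof. unfold pi_p, P. field. split. 
  assert (0 < sin (PI / p)). { apply sin_gt_0. apply Rdiv_lt_0_compat; [apply PI_RGT_0|lra].
    apply Rmult_lt_reg_r with p. lra. field_simplify; try lra. pose proof PI_RGT_0; nra. }
  lra. lra. Qed.

Lemma part1 x : 0 < x < 1 ->
  (1 + rpow x p / (p * (1 + p))) * x < arcsin_p p x /\ arcsin_p p x < pi_p p / 2 * x.
Proof.
  intros Hx. pose proof Ha2 as Ha'.
  rewrite (arcsin_formula p Hp x ltac:(lra)). fold a.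
  assert (Hu : 0 < rpow x p < 1) by (split; [apply rpow_gt0; lra| apply rpow_lt1; lra]).
  split.
  - pose proof (Fs_lower a Ha' _ Hu) as HL.
    replace (a * a / (1 + a)) with (1 / (p * (1 + p))) in HL by (unfold a; field; lra).
    replace (rpow x p / (p * (1 + p))) with (1 / (p * (1 + p)) * rpow x p) by (field; lra).
    rewrite Rmult_comm. apply Rmult_lt_compat_l; lra.
  - rewrite pi_p_half. rewrite (Rmult_comm P). apply Rmult_lt_compat_l. lra. apply F_upper; auto.
Qed.

Lemma hyp_F : hyp2F1 a a (1 + a) (1 / 2) = Fs a (1 / 2).
Proof.
  unfold hyp2F1, Fs, PSeries. apply Series_ext. intros n. unfold cco.
  pose proof (INR_fact_pos n). pose proof (poch_pos (1 + a) n ltac:(pose proof Ha2; lra)).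
  field. lra.
Qed.

Lemma part3 x : 0 < x < 1 ->
  (p * (1 + p) * (1 + rpow x p) + rpow x p) * x
          / (p * (1 + p) * rpow (1 + rpow x p) (1 + 1 / p)) < arctan_p p x
  /\ arctan_p p x
          < rpow 2 (1 / p) * b_p p * rpow (rpow x p / (1 + rpow x p)) (1 / p).
Proof.
  intros Hx. pose proof Ha2 as Ha'.
  rewrite (arctan_formula p Hp x ltac:(lra)). fold a.
  set (u := rpow x p).
  assert (Hu : 0 < u < 1) by (split; [apply rpow_gt0; lra| apply rpow_lt1; lra]).
  set (Q := Rpower (1 + u) a).
  assert (HQ : 0 < Q) by apply Rpower_gt0.
  assert (HW : Rpower (1 + u) (- a) = / Q) by (unfold Q; apply Rpower_Ropp).
  rewrite HW.
  assert (Hz : 0 < u / (1 + u) < 1 / 2).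
  { split. apply Rdiv_lt_0_compat; lra. apply Rmult_lt_reg_r with (2 * (1 + u)). lra. field_simplify; lra. }
  split.
  - rewrite (rpow_pos (1 + u)) by lra. rewrite Rpower_plus, Rpower_1 by lra. fold Q.
    pose proof (Fs_lower a Ha' (u / (1 + u)) ltac:(lra)) as HL.
    replace (a * a / (1 + a)) with (1 / (p * (1 + p))) in HL by (unfold a; field; lra).
    apply Rle_lt_trans with (x * / Q * (1 + 1 / (p * (1 + p)) * (u / (1 + u)))).
    + right. field. repeat split; lra.
    + apply Rmult_lt_compat_l. apply Rmult_lt_0_compat; [lra| apply Rinv_0_lt_compat; lra]. lra.
  - unfold b_p. fold a.
    rewrite <- Rmult_assoc, <- rpow_plus. replace (a + - a) with 0 by ring.
    rewrite rpow_pos, Rpower_O by lra. rewrite Rmult_1_l. rewrite hyp_F.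
    assert (Hr : rpow (u / (1 + u)) a = x * / Q).
    { rewrite rpow_pos by lra. unfold Rdiv. rewrite <- Rpower_mult_distr by (try apply Rinv_0_lt_compat; lra).
      unfold u. rewrite <- (rpow_pos (rpow x p)) by exact (proj1 Hu). rewrite rpow_inv_p' by lra.
      unfold Q, Rpower. rewrite ln_Rinv by (pose proof (rpow_ge0 x p); lra). rewrite <- exp_Ropp. fold u. f_equal. f_equal. ring. }
    rewrite Hr. rewrite (Rmult_comm (Fs a (1 / 2))).
    apply Rmult_lt_compat_l. apply Rmult_lt_0_compat; [lra| apply Rinv_0_lt_compat; lra].
    apply Fs_incr; auto; lra.
Qed.

Lemma part2 x : 0 < x < 1 ->
  (1 + (1 - rpow x p) / (p * (1 + p))) * rpow (1 - rpow x p) (1 / p) < arccos_p p x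
  /\ arccos_p p x < pi_p p / 2 * rpow (1 - rpow x p) (1 / p).
Proof.
  intros Hx. unfold arccos_p.
  assert (Hu : 0 < rpow x p < 1) by (split; [apply rpow_gt0; lra| apply rpow_lt1; lra]).
  set (y := rpow (1 - rpow x p) (1 / p)).
  assert (Hy : 0 < y < 1).
  { split. apply rpow_gt0; lra. apply rpow_lt1. lra. apply Rdiv_lt_0_compat; lra. }
  pose proof (part1 y Hy) as H.
  replace (rpow y p) with (1 - rpow x p) in H. exact H.
  unfold y. fold a. rewrite rpow_inv_p; lra.
Qed.

End Assembly.

Lemma sum_opp (F : nat -> R) N : sum_f_R0 (fun n => - F n) N = - sum_f_R0 F N.
Proof. induction N; simpl. ring. rewrite IHN. ring. Qed.

Lemma rpow_base1 q : rpow 1 q = 1.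
Proof. rewrite rpow_pos by lra. unfold Rpower. rewrite ln_1, Rmult_0_r, exp_0. reflexivity. Qed.

Lemma is_derive_sum (phi dphi : nat -> R -> R) m t :
  (forall n, (n <= m)%nat -> is_derive (phi n) t (dphi n t)) ->
  is_derive (fun s => sum_f_R0 (fun n => phi n s) m) t (sum_f_R0 (fun n => dphi n t) m).
Proof.
  induction m; intros H; simpl.
  - apply H; lia.
  - apply is_derive_plus_R. apply IHm; intros; apply H; lia. apply H; lia.
Qed.

Lemma ex_derive_sum (phi : nat -> R -> R) m t :
  (forall n, (n <= m)%nat -> ex_derive (phi n) t) ->
  ex_derive (fun s => sum_f_R0 (fun n => phi n s) m) t.
Proof.
  intros H. exists (sum_f_R0 (fun n => Derive (phi n) t) m).
  apply (is_derive_sum phi (fun n s => Derive (phi n) s) m t). intros n Hn. apply Derive_correct. auto.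
Qed.

Lemma continuous_of_ex_derive (f : R -> R) x : ex_derive f x -> continuous f x.
Proof. intros [l H]. eapply continuous_of_derive; eauto. Qed.

Lemma RInt_le_deriv (f g Phi : R -> R) a b : a <= b ->
  (forall t, a <= t <= b -> is_derive Phi t (g t)) ->
  (forall t, a <= t <= b -> continuous g t) ->
  (forall t, a <= t <= b -> continuous f t) ->
  (forall t, a < t < b -> f t <= g t) -> RInt f a b <= Phi b - Phi a.
Proof.
  intros Hab HD HC Hf Hle.
  pose proof (is_RInt_derive Phi g a b) as HI.
  rewrite Rmin_left, Rmax_right in HI by lra. specialize (HI HD HC).
  replace (Phi b - Phi a) with (RInt g a b).
  - apply RInt_le; auto.
    apply (ex_RInt_continuous (V:=R_CompleteNormedModule)). rewrite Rmin_left, Rmax_right by lra. auto.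
    apply (ex_RInt_continuous (V:=R_CompleteNormedModule)). rewrite Rmin_left, Rmax_right by lra. auto.
  - apply is_RInt_unique in HI. rewrite HI. reflexivity.
Qed.

Lemma pow_m1_even n : (-1) ^ (2 * n) = 1.
Proof. induction n. reflexivity. replace (2 * S n)%nat with (S (S (2 * n))) by lia. simpl. simpl in IHn. rewrite IHn. ring. Qed.
Lemma pow_m1_odd n : (-1) ^ S (2 * n) = -1.
Proof. change ((-1) ^ S (2 * n)) with (-1 * (-1) ^ (2 * n)). rewrite pow_m1_even. ring. Qed.

Lemma geom_alt u m : (1 + u) * sum_f_R0 (fun n => (-1) ^ n * u ^ n) m = 1 + (-1) ^ m * u ^ (S m).
Proof.
  induction m; simpl. ring.
  rewrite Rmult_plus_distr_l, IHm. simpl. ring.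
Qed.

Lemma geom_bound u K : 0 <= u -> / (1 + u) <= sum_f_R0 (fun n => (-1) ^ n * u ^ n) (2 * K).
Proof.
  intros Hu. pose proof (geom_alt u (2 * K)) as G. rewrite pow_m1_even in G.
  assert (0 <= u ^ S (2 * K)) by (apply pow_le; auto).
  apply Rmult_le_reg_l with (1 + u). lra. rewrite G. rewrite Rinv_r by lra. lra.
Qed.

Lemma alt_sum_ge (e : nat -> R) K : (forall n, 0 <= e (S n) <= e n) ->
  e (2 * K)%nat <= sum_f_R0 (fun n => (-1) ^ n * e n) (2 * K).
Proof.
  intros He. induction K.
  - simpl. lra.
  - replace (2 * S K)%nat with (S (S (2 * K))) by lia. rewrite !tech5.
    replace ((-1) ^ S (S (2 * K))) with ((-1) ^ (2 * S K)) by (f_equal; lia). rewrite pow_m1_even.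
    replace ((-1) ^ S (2 * K)) with (-1) by (rewrite pow_m1_odd; ring).
    pose proof (He (2 * K)%nat). pose proof (He (S (2 * K))). lra.
Qed.

Section S7.
Variable p : R.
Hypothesis Hp : 1 < p.
Let a := 1 / p.

Definition AK (K : nat) := sum_f_R0 (fun n => (-1) ^ n / (INR n * p + 1)) (2 * K).
Definition BK (K : nat) := sum_f_R0 (fun n => (-1) ^ n / (INR n * p + p - 1)) (2 * K).

Lemma cont_f t : continuous (fun s => / (1 + rpow s p)) t.
Proof.
  pose proof (rpow_ge0 t p).
  eapply continuous_of_derive.
  apply (is_derive_comp_R (fun v => / v) (fun s => 1 + rpow s p)).
  apply is_derive_inv_R; lra.
  apply is_derive_plus_R. apply is_derive_const_R. apply is_derive_rpow; auto.
Qed.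

Lemma bound_01 K : arctan_p p 1 <= AK K.
Proof.
  unfold arctan_p.
  set (Phi := fun s => sum_f_R0 (fun n => (-1) ^ n / (INR n * p + 1) * (s * (rpow s p) ^ n)) (2 * K)).
  set (g := fun s => sum_f_R0 (fun n => (-1) ^ n * (rpow s p) ^ n) (2 * K)).
  apply Rle_trans with (Phi 1 - Phi 0).
  - apply (RInt_le_deriv _ g Phi 0 1). lra.
    + intros t Ht. unfold Phi, g.
      apply (is_derive_sum (fun n s => (-1) ^ n / (INR n * p + 1) * (s * (rpow s p) ^ n))
                           (fun n s => (-1) ^ n * (rpow s p) ^ n)).
      intros n _. pose proof (pos_INR n).
      eapply is_derive_eq.
      * apply (is_derive_scal (fun s => (s * (rpow s p) ^ n)) t ((-1)^n / (INR n * p + 1))).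
        apply is_derive_mul_R. apply is_derive_id_R. apply is_derive_pow. apply is_derive_rpow; auto.
      * change (?x = ?y) with (@eq R x y). assert (tR1 : t * rpow t (p - 1) = rpow t p) by (rewrite rpow_mul_t; f_equal; ring).
        destruct n.
        -- simpl. rewrite !Rmult_0_l, Rplus_0_l, Rmult_0_r, Rplus_0_r. field.
        -- simpl pred. replace (t * (INR (S n) * (p * rpow t (p - 1)) * rpow t p ^ n))
             with (INR (S n) * p * (t * rpow t (p - 1)) * rpow t p ^ n) by ring.
           rewrite tR1. simpl pow. field. nra.
    + intros t Ht. apply continuous_of_ex_derive. unfold g.
      apply (ex_derive_sum (fun n s => (-1) ^ n * (rpow s p) ^ n)). intros n _.
      eexists. apply (is_derive_scal (fun s => rpow s p ^ n)). apply is_derive_pow. apply is_derive_rpow; auto.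
    + intros; apply cont_f.
    + intros t Ht. unfold g.
      apply geom_bound. apply rpow_ge0.
  - unfold Phi, AK. rewrite rpow_base1.
    replace (sum_f_R0 (fun n => (-1) ^ n / (INR n * p + 1) * (0 * rpow 0 p ^ n)) (2 * K)) with 0.
    + rewrite Rminus_0_r. right. apply sum_eq. intros n _. rewrite pow1. ring.
    + rewrite <- (sum_eq (fun _ => 0)). rewrite sum_cte. ring. intros; unfold Rdiv; ring.
Qed.

Lemma bound_1Y K Y : 1 <= Y -> RInt (fun t => / (1 + rpow t p)) 1 Y <= BK K.
Proof.
  intros HY.
  set (q := fun n : nat => INR n * p + p).
  assert (Hq : forall n, p <= q n) by (intros n; unfold q; pose proof (pos_INR n); nra).
  set (Psi := fun s => sum_f_R0 (fun n => (-1) ^ n / (1 - q n) * Rpower s (1 - q n)) (2 * K)).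
  set (g := fun s => sum_f_R0 (fun n => (-1) ^ n * Rpower s (- q n)) (2 * K)).
  apply Rle_trans with (Psi Y - Psi 1).
  - apply (RInt_le_deriv _ g Psi 1 Y). lra.
    + intros t Ht. unfold Psi, g.
      apply (is_derive_sum (fun n s => (-1) ^ n / (1 - q n) * Rpower s (1 - q n))
                           (fun n s => (-1) ^ n * Rpower s (- q n))).
      intros n _. pose proof (Hq n).
      eapply is_derive_eq.
      * apply (is_derive_scal (fun s => Rpower s (1 - q n)) t ((-1)^n / (1 - q n))).
        apply is_derive_Rpower_R. lra.
      * change (?x = ?y) with (@eq R x y). replace (1 - q n - 1) with (- q n) by ring. field. lra.
    + intros t Ht. apply continuous_of_ex_derive. unfold g.
      apply (ex_derive_sum (fun n s => (-1) ^ n * Rpower s (- q n))). intros n _.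
      eexists. apply (is_derive_scal (fun s => Rpower s (- q n))). apply is_derive_Rpower_R. lra.
    + intros; apply cont_f.
    + intros t Ht. unfold g. set (v := Rpower t (- p)).
      assert (Hv : 0 < v) by apply Rpower_gt0.
      assert (E : forall n, (-1) ^ n * Rpower t (- q n) = (-1) ^ n * v ^ n * v).
      { intros n. unfold q, v. rewrite <- (Rpower_pow n (Rpower t (- p))) by apply Rpower_gt0.
        rewrite Rpower_mult. rewrite Rmult_assoc, <- Rpower_plus. f_equal. f_equal. ring. }
      rewrite (sum_eq _ _ _ (fun n _ => E n)).
      rewrite <- scal_sum.
      rewrite rpow_pos by lra.
      replace (Rpower t p) with (/ v) by (unfold v; rewrite Rpower_Ropp, Rinv_inv; reflexivity).
      replace (/ (1 + / v)) with (v * / (1 + v)) by (field; lra).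
      apply Rmult_le_compat_l. lra. apply geom_bound. lra.
  - unfold Psi, BK.
    rewrite <- minus_sum.
    assert (E1 : forall n, (-1) ^ n / (1 - q n) * Rpower 1 (1 - q n) = - ((-1) ^ n / (INR n * p + p - 1))).
    { intros n. pose proof (Hq n). rewrite <- (rpow_pos 1) by lra. rewrite rpow_base1. unfold q. field. unfold q in H. lra. }
    apply Rminus_le. rewrite <- minus_sum.
    apply Rle_trans with (- sum_f_R0 (fun n => (-1) ^ n * (Rpower Y (1 - q n) / (q n - 1))) (2 * K)).
    + right. rewrite <- sum_opp.
      apply sum_eq. intros n _. rewrite E1. pose proof (Hq n). unfold q in *. field. lra.
    + apply Ropp_le_cancel. rewrite Ropp_involutive, Ropp_0.
      apply Rle_trans with (Rpower Y (1 - q (2 * K)%nat) / (q (2 * K)%nat - 1)).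
      * pose proof (Hq (2 * K)%nat). apply Rdiv_le_0_compat. left; apply Rpower_gt0. lra.
      * apply (alt_sum_ge (fun n => Rpower Y (1 - q n) / (q n - 1))).
        intros n. pose proof (Hq n). pose proof (Hq (S n)).
        assert (Hqs : q (S n) = q n + p) by (unfold q; rewrite S_INR; ring).
        split. apply Rdiv_le_0_compat. left; apply Rpower_gt0. lra.
        unfold Rdiv. apply Rmult_le_compat. left; apply Rpower_gt0. left; apply Rinv_0_lt_compat; lra.
        apply Rle_Rpower; lra.
        apply Rinv_le_contravar; lra.
Qed.

End S7.


Fixpoint Dk (N : nat) (x : R) : R :=
  match N with O => 1 / 2 | S n => Dk n x + cos (INR (S n) * x) end.

Fixpoint SN (a : R) (N : nat) : R :=
  match N with
  | O => 1 / a
  | S n => SN a n + (-1) ^ (S n) * (2 * a / (a * a - INR (S n) * INR (S n)))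
  end.

Lemma Dk_sin N x : 2 * sin (x / 2) * Dk N x = sin ((INR N + 1 / 2) * x).
Proof.
  induction N.
  - simpl. replace ((0 + 1 / 2) * x) with (x / 2) by (rq; field). rq; field.
  - cbn [Dk]. rewrite Rmult_plus_distr_l, IHN.
    replace ((INR (S N) + 1 / 2) * x) with (INR (S N) * x + x / 2) by (rewrite S_INR; field).
    replace ((INR N + 1 / 2) * x) with (INR (S N) * x - x / 2) by (rewrite S_INR; field).
    rewrite sin_plus, sin_minus. rq; ring.
Qed.

Lemma sin_nPI n : sin (INR n * PI) = 0.
Proof.
  induction n. simpl. rewrite Rmult_0_l. apply sin_0.
  rewrite S_INR, Rmult_plus_distr_r, Rmult_1_l, sin_plus, IHn, sin_PI. rq; ring.
Qed.

Lemma cos_nPI n : cos (INR n * PI) = (-1) ^ n.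
Proof.
  induction n. simpl. rewrite Rmult_0_l. apply cos_0.
  rewrite S_INR, Rmult_plus_distr_r, Rmult_1_l, cos_plus, IHn, sin_PI, cos_PI. simpl. rq; ring.
Qed.

Lemma is_derive_Dk N x : is_derive (Dk N) x (- sum_f_R0 (fun k => INR k * sin (INR k * x)) N).
Proof.
  induction N.
  - simpl. eapply is_derive_eq. apply (is_derive_const (K:=R_AbsRing) (1/2)). simpl. unfold zero; simpl. change (?x = ?y) with (@eq R x y). rq; ring.
  - cbn [Dk]. eapply is_derive_eq.
    + apply is_derive_plus_R. apply IHN.
      assert (H : forall k, is_derive (fun x => cos (k * x)) x (- (k * sin (k * x)))).
      { intros k. auto_derive. auto. rq; ring. }
      apply H.
    + change (?x = ?y) with (@eq R x y). rewrite tech5. rq; ring.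
Qed.

Lemma cont_Dk N x : continuous (Dk N) x.
Proof. apply (ex_derive_continuous (K:=R_AbsRing) (V:=R_NormedModule)). eexists; apply is_derive_Dk. Qed.

Lemma ex_RInt_of_cont (f : R -> R) a b : (forall x, continuous f x) -> ex_RInt f a b.
Proof. intros H. apply (ex_RInt_continuous (V:=R_CompleteNormedModule)). intros; apply H. Qed.

Lemma RInt_by_deriv (f F : R -> R) a b :
  (forall x, is_derive F x (f x)) -> (forall x, continuous f x) -> RInt f a b = F b - F a.
Proof.
  intros HD HC. apply is_RInt_unique. apply (is_RInt_derive F f a b).
  intros; apply HD. intros; apply HC.
Qed.

Section Dir.
Variable a : R.
Hypothesis Ha : 0 < a < 1.

Lemma cont_cosD N x : continuous (fun x => cos (a * x) * Dk N x) x.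
Proof.
  apply (ex_derive_continuous (K:=R_AbsRing) (V:=R_NormedModule)).
  eexists. apply (is_derive_mult (K:=R_AbsRing) (fun x => cos (a * x)) (Dk N)).
  auto_derive; auto. apply is_derive_Dk. intros; apply Rmult_comm.
Qed.

Lemma int_cos_cos k : 1 <= k ->
  RInt (fun x => cos (a * x) * cos (k * x)) 0 PI =
  sin (a * PI) * cos (k * PI) * (a / (a * a - k * k)) + cos (a * PI) * sin (k * PI) * (k / (k * k - a * a)).
Proof.
  intros Hk.
  rewrite (RInt_by_deriv _ (fun x => sin ((a + k) * x) / (2 * (a + k)) + sin ((a - k) * x) / (2 * (a - k)))).
  - rewrite !Rmult_0_r, sin_0. rewrite Rmult_plus_distr_r, Rmult_minus_distr_r, sin_plus, sin_minus.
    change (?x = ?y) with (@eq R x y). rq; field. repeat split; nra.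
  - intros x. auto_derive. repeat split; lra.
    replace ((a + k) * x) with (a * x + k * x) by (rq; ring). replace ((a - k) * x) with (a * x - k * x) by (rq; ring). rewrite cos_plus, cos_minus. rq; field. split; lra.
  - intros x. apply (ex_derive_continuous (K:=R_AbsRing) (V:=R_NormedModule)). auto_derive. auto.
Qed.

Lemma L2 N : RInt (fun x => cos (a * x) * Dk N x) 0 PI = sin (a * PI) / 2 * SN a N.
Proof.
  induction N.
  - simpl. rewrite (RInt_by_deriv _ (fun x => sin (a * x) / (2 * a))).
    rewrite Rmult_0_r, sin_0. rq; field. lra.
    intros x. auto_derive. lra. rq; field. lra.
    intros x. apply (ex_derive_continuous (K:=R_AbsRing) (V:=R_NormedModule)). auto_derive. auto.
  - cbn [Dk SN].
    rewrite (RInt_ext _ (fun x => cos (a * x) * Dk N x + cos (a * x) * cos (INR (S N) * x))).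
    2:{ intros; rq; ring. }
    rewrite (RInt_plus (V:=R_CompleteNormedModule) (fun x => cos (a * x) * Dk N x) (fun x => cos (a * x) * cos (INR (S N) * x))).
    2: apply ex_RInt_of_cont; intros; apply cont_cosD.
    2: { apply ex_RInt_of_cont; intros x. apply (ex_derive_continuous (K:=R_AbsRing) (V:=R_NormedModule)). auto_derive. auto. }
    change (plus ?u ?v) with (Rplus u v). rewrite IHN.
    rewrite int_cos_cos. rewrite sin_nPI, cos_nPI.
    assert (1 <= INR (S N)) by (rewrite S_INR; pose proof (pos_INR N); lra).
    rq; field. nra.
    rewrite S_INR; pose proof (pos_INR N); lra.
Qed.

End Dir.

Lemma L3 N : RInt (Dk N) 0 PI = PI / 2.
Proof.
  induction N.
  - simpl. rewrite RInt_const. unfold scal; simpl; unfold mult; simpl. rq; field.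
  - cbn [Dk].
    rewrite (RInt_plus (V:=R_CompleteNormedModule) (Dk N) (fun x => cos (INR (S N) * x))).
    2: apply ex_RInt_of_cont; intros; apply cont_Dk.
    2: { apply ex_RInt_of_cont; intros x. apply (ex_derive_continuous (K:=R_AbsRing) (V:=R_NormedModule)). auto_derive. auto. }
    change (plus ?u ?v) with (Rplus u v). rewrite IHN.
    assert (0 < INR (S N)) by (rewrite S_INR; pose proof (pos_INR N); lra).
    assert (HI : forall k, 0 < k -> RInt (fun x => cos (k * x)) 0 PI = sin (k * PI) / k).
    { intros k Hk. rewrite (RInt_by_deriv _ (fun x => sin (k * x) / k)).
      rewrite Rmult_0_r, sin_0. rq; field. lra.
      intros x. auto_derive. lra. rq; field. lra.
      intros x. apply (ex_derive_continuous (K:=R_AbsRing) (V:=R_NormedModule)). auto_derive. auto. }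
    rewrite HI by auto. rewrite sin_nPI. rq; field. lra.
Qed.


Lemma cont_of_pt (h : R -> R) x : continuity_pt h x -> continuous h x.
Proof. intros H. apply continuity_pt_filterlim in H. exact H. Qed.

Lemma cont_mul (f g : R -> R) x : continuous f x -> continuous g x -> continuous (fun y => f y * g y) x.
Proof. intros H1 H2. apply (continuous_mult (K:=R_AbsRing) f g x H1 H2). Qed.

Lemma cont_sinM (M : R) x : continuous (fun y => sin (M * y)) x.
Proof. apply (ex_derive_continuous (K:=R_AbsRing) (V:=R_NormedModule)). auto_derive. auto. Qed.

Lemma ex_RInt_on (f : R -> R) u v : u <= v -> (forall x, u <= x <= v -> continuous f x) -> ex_RInt f u v.
Proof. intros Huv H. apply (ex_RInt_continuous (V:=R_CompleteNormedModule)). rewrite Rmin_left, Rmax_right by lra. auto. Qed.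

Lemma RL (h : R -> R) L : 0 < L -> (forall x, 0 <= x <= L -> continuity_pt h x) ->
  forall eps, 0 < eps -> exists M0, forall M, M0 <= M ->
    Rabs (RInt (fun x => h x * sin (M * x)) 0 L) <= eps.
Proof.
  intros HL Hc eps Heps.
  destruct (continuity_ab_maj (fun x => Rabs (h x)) 0 L ltac:(lra)) as [c [Hcm Hc0]].
  { intros x Hx. apply (continuity_pt_comp h Rabs). auto. apply Rcontinuity_abs. }
  set (B := Rabs (h c) + 1).
  assert (HB : forall x, 0 <= x <= L -> Rabs (h x) <= B) by (intros x Hx; pose proof (Hcm x Hx); unfold B; simpl in *; lra).
  assert (HB0 : 0 < B) by (unfold B; pose proof (Rabs_pos (h c)); lra).
  assert (Heta : 0 < eps / L) by (apply Rdiv_lt_0_compat; lra).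
  destruct (Heine_cor2 Hc (mkposreal _ Heta)) as [d0 Hd0]. simpl in Hd0.
  set (d1 := Rmin (Rmin (d0 / 2) (eps / (2 * B))) L).
  assert (Hd1 : 0 < d1).
  { unfold d1. pose proof (cond_pos d0). apply Rmin_pos. apply Rmin_pos. lra.
    apply Rdiv_lt_0_compat; lra. lra. }
  exists (PI / d1). intros M HM.
  pose proof PI_RGT_0 as Hpi.
  assert (HM0 : 0 < M) by (eapply Rlt_le_trans; [|apply HM]; apply Rdiv_lt_0_compat; lra).
  set (d := PI / M).
  assert (Hd : 0 < d) by (apply Rdiv_lt_0_compat; lra).
  assert (Hdd1 : d <= d1).
  { assert (PI <= d1 * M) by (apply Rle_trans with (d1 * (PI / d1)); [right; field; lra | apply Rmult_le_compat_l; lra]).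
    unfold d. apply Rmult_le_reg_r with M; [lra|]. unfold Rdiv. rewrite Rmult_assoc, Rinv_l by lra. lra. }
  assert (HdL : d <= L) by (eapply Rle_trans; [apply Hdd1|apply Rmin_r]).
  assert (Hdd0 : d < d0) by (assert (d1 <= d0 / 2) by (unfold d1; eapply Rle_trans; [apply Rmin_l|apply Rmin_l]); pose proof (cond_pos d0); lra).
  assert (HdB : 2 * d * B <= eps).
  { assert (d1 <= eps / (2 * B)) by (unfold d1; eapply Rle_trans; [apply Rmin_l|apply Rmin_r]).
    apply Rle_trans with (2 * (eps / (2 * B)) * B). apply Rmult_le_compat_r; lra.
    right; field; lra. }
  set (phi := fun x => h x * sin (M * x)).
  assert (Hphi : forall x, 0 <= x <= L -> continuous phi x).
  { intros x Hx. apply cont_mul. apply cont_of_pt; auto. apply cont_sinM. }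
  assert (Hphib : forall x, 0 <= x <= L -> Rabs (phi x) <= B).
  { intros x Hx. unfold phi. rewrite Rabs_mult. pose proof (HB x Hx). pose proof (Rabs_pos (h x)).
    assert (Rabs (sin (M * x)) <= 1) by (apply Rabs_le; apply SIN_bound).
    apply Rle_trans with (Rabs (h x) * 1). apply Rmult_le_compat_l; lra. lra. }
  assert (Ex : forall u v, 0 <= u <= v -> v <= L -> ex_RInt phi u v).
  { intros u v Huv HvL. apply ex_RInt_on. lra. intros; apply Hphi; lra. }
  set (psi := fun x => h (x + d) * sin (M * x)).
  set (chi := fun x => (h x - h (x + d)) * sin (M * x)).
  assert (Hpsi : forall x, phi (x + d) = - psi x).
  { intros x. unfold phi, psi. replace (M * (x + d)) with (M * x + PI) by (unfold d; field; lra).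
    rewrite neg_sin. ring. }
  assert (Expsi : ex_RInt psi 0 (L - d)).
  { apply ex_RInt_on. lra. intros x Hx. apply cont_mul. 2: apply cont_sinM.
    apply (continuous_comp (fun x => x + d) h). apply (ex_derive_continuous (K:=R_AbsRing) (V:=R_NormedModule)).
    auto_derive. auto. apply cont_of_pt. apply Hc. lra. }
  assert (E1 : RInt phi 0 L = RInt phi 0 d + RInt phi d L).
  { rewrite <- (RInt_Chasles (V:=R_CompleteNormedModule) phi 0 d L). reflexivity. apply Ex; lra. apply Ex; lra. }
  assert (E2 : RInt phi d L = - RInt psi 0 (L - d)).
  { assert (H := RInt_comp_lin (V:=R_CompleteNormedModule) phi 1 d 0 (L - d)).
    replace (1 * 0 + d) with d in H by ring. replace (1 * (L - d) + d) with L in H by ring.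
    rewrite <- H by (apply Ex; lra).
    rewrite <- (RInt_opp (V:=R_CompleteNormedModule)) by auto.
    apply RInt_ext. intros x _. unfold scal; simpl; unfold mult; simpl.
    rewrite Rmult_1_l, Rmult_1_l. rewrite Hpsi. reflexivity. }
  assert (E3 : RInt phi 0 L = RInt phi 0 (L - d) + RInt phi (L - d) L).
  { rewrite <- (RInt_Chasles (V:=R_CompleteNormedModule) phi 0 (L - d) L). reflexivity. apply Ex; lra. apply Ex; lra. }
  assert (E4 : RInt phi 0 (L - d) - RInt psi 0 (L - d) = RInt chi 0 (L - d)).
  { rewrite <- (RInt_minus (V:=R_CompleteNormedModule)); [| apply Ex; lra | auto].
    apply RInt_ext. intros x _. unfold minus, plus, opp, phi, psi, chi; simpl. ring. }
  assert (B1 : Rabs (RInt phi 0 d) <= d * B).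
  { replace (d * B) with ((d - 0) * B) by ring. apply abs_RInt_le_const. lra. apply Ex; lra.
    intros t Ht; apply Hphib; lra. }
  assert (B2 : Rabs (RInt phi (L - d) L) <= d * B).
  { replace (d * B) with ((L - (L - d)) * B) by ring. apply abs_RInt_le_const. lra. apply Ex; lra.
    intros t Ht; apply Hphib; lra. }
  assert (B3 : Rabs (RInt chi 0 (L - d)) <= (L - d) * (eps / L)).
  { replace ((L - d) * (eps / L)) with ((L - d - 0) * (eps / L)) by ring.
    apply abs_RInt_le_const. lra.
    { apply (ex_RInt_ext (V:=R_CompleteNormedModule) (fun x => minus (phi x) (psi x))).
      intros x _. unfold minus, plus, opp, phi, psi, chi; simpl. ring.
      apply (ex_RInt_minus (V:=R_CompleteNormedModule)). apply Ex; lra. auto. }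
    intros t Ht. unfold chi. rewrite Rabs_mult.
    assert (Rabs (h t - h (t + d)) < eps / L).
    { apply Hd0; try lra. rewrite Rabs_minus_sym. replace (t + d - t) with d by ring. rewrite Rabs_pos_eq; lra. }
    assert (Rabs (sin (M * t)) <= 1) by (apply Rabs_le; apply SIN_bound).
    pose proof (Rabs_pos (h t - h (t + d))).
    apply Rle_trans with (Rabs (h t - h (t + d)) * 1). apply Rmult_le_compat_l; lra. lra. }
  assert (B4 : (L - d) * (eps / L) <= eps).
  { apply Rle_trans with (L * (eps / L)). apply Rmult_le_compat_r; lra. right; field; lra. }
  fold phi.
  assert (Htwo : 2 * RInt phi 0 L = RInt phi 0 d + RInt phi (L - d) L + RInt chi 0 (L - d)).
  { rewrite <- E4. replace (2 * RInt phi 0 L) with (RInt phi 0 L + RInt phi 0 L) by ring.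
    rewrite E1 at 1. rewrite E2, E3. ring. }
  assert (Rabs (2 * RInt phi 0 L) <= 2 * eps).
  { rewrite Htwo. eapply Rle_trans. apply Rabs_triang. eapply Rle_trans.
    apply Rplus_le_compat_r. apply Rabs_triang. lra. }
  rewrite Rabs_mult, Rabs_pos_eq in H by lra. lra.
Qed.


Lemma nonneg_deriv (Fn f : R -> R) t : 0 <= t ->
  (forall s, 0 <= s <= t -> is_derive Fn s (f s)) ->
  (forall s, 0 <= s <= t -> continuous f s) ->
  (forall s, 0 <= s <= t -> 0 <= f s) -> Fn 0 <= Fn t.
Proof.
  intros Ht HD HC Hp.
  pose proof (RInt_le_deriv (fun _ => 0) f Fn 0 t Ht HD HC (fun s _ => continuous_const (0:R) s)) as H.
  rewrite RInt_const in H. unfold scal in H; simpl in H; unfold mult in H; simpl in H.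
  assert (0 <= Fn t - Fn 0). { eapply Rle_trans; [|apply H]. lra. intros; apply Hp; lra. }
  lra.
Qed.

Lemma contR (f : R -> R) x : ex_derive f x -> continuous f x.
Proof. intros; apply (ex_derive_continuous (K:=R_AbsRing) (V:=R_NormedModule)); auto. Qed.

Lemma sin_le_id t : 0 <= t -> sin t <= t.
Proof.
  intros Ht. pose proof (nonneg_deriv (fun s => s - sin s) (fun s => 1 - cos s) t Ht) as H.
  simpl in H. rewrite sin_0 in H.
  assert (0 - 0 <= t - sin t). apply H.
  - intros s _. auto_derive. auto. ring.
  - intros s _. apply contR. auto_derive. auto.
  - intros s _. pose proof (COS_bound s). lra.
  - lra.
Qed.

Lemma cos_lb2 t : 0 <= t -> 1 - cos t <= t * t / 2.
Proof.
  intros Ht. pose proof (nonneg_deriv (fun s => s * s / 2 - 1 + cos s) (fun s => s - sin s) t Ht) as H.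
  simpl in H. rewrite cos_0 in H.
  assert (0 * 0 / 2 - 1 + 1 <= t * t / 2 - 1 + cos t). apply H.
  - intros s _. auto_derive. auto. field.
  - intros s _. apply contR. auto_derive. auto.
  - intros s Hs. pose proof (sin_le_id s ltac:(lra)). lra.
  - lra.
Qed.

Lemma sin_lb3 t : 0 <= t -> t - t * t * t / 6 <= sin t.
Proof.
  intros Ht. pose proof (nonneg_deriv (fun s => sin s - s + s * s * s / 6) (fun s => cos s - 1 + s * s / 2) t Ht) as H.
  simpl in H. rewrite sin_0 in H.
  assert (0 - 0 + 0 * 0 * 0 / 6 <= sin t - t + t * t * t / 6). apply H.
  - intros s _. auto_derive. auto. field.
  - intros s _. apply contR. auto_derive. auto.
  - intros s Hs. pose proof (cos_lb2 s ltac:(lra)). lra.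
  - lra.
Qed.

Definition hh (a x : R) : R := if Req_EM_T x 0 then 0 else (cos (a * x) - 1) / (2 * sin (x / 2)).

Section HH.
Variable a : R.
Hypothesis Ha : 0 < a < 1.

Lemma hh_pos_bound x : 0 < x <= 1 -> Rabs (hh a x) <= x.
Proof.
  intros Hx. unfold hh. destruct (Req_EM_T x 0). lra.
  assert (Hc1 : 1 - cos (a * x) <= x * x / 2).
  { assert (0 <= a * x <= x) by nra. eapply Rle_trans. apply cos_lb2. lra. apply Rmult_le_compat_r. lra. apply Rmult_le_compat; lra. }
  assert (Hc2 : 0 <= 1 - cos (a * x)) by (pose proof (COS_bound (a * x)); lra).
  assert (Hs : x / 4 <= sin (x / 2)).
  { eapply Rle_trans; [|apply sin_lb3; lra]. nra. }
  apply Rabs_le. split.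
  - apply Rmult_le_reg_r with (2 * sin (x / 2)). lra.
    unfold Rdiv. rewrite Rmult_assoc, Rinv_l by lra. nra.
  - apply Rle_trans with 0; [|lra].
    apply Rmult_le_reg_r with (2 * sin (x / 2)). lra.
    unfold Rdiv. rewrite Rmult_assoc, Rinv_l by lra. nra.
Qed.

Lemma hh_bound x : Rabs x <= 1 -> Rabs (hh a x) <= Rabs x.
Proof.
  intros Hx. destruct (Rtotal_order x 0) as [Hn|[H0|Hp]].
  - assert (E : hh a x = - hh a (- x)).
    { unfold hh. destruct (Req_EM_T x 0); destruct (Req_EM_T (- x) 0); try lra.
      replace (a * x) with (- (a * - x)) by ring. rewrite cos_neg.
      replace (x / 2) with (- (- x / 2)) by field. rewrite sin_neg. field.
      assert (0 < sin (- x / 2)) by (apply sin_gt_0; pose proof PI_RGT_0; pose proof (Rabs_pos x);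
        rewrite Rabs_left in Hx by lra; pose proof (PI2_1); lra). lra. }
    rewrite E, Rabs_Ropp, (Rabs_left x) by lra. apply hh_pos_bound.
    rewrite Rabs_left in Hx; lra.
  - subst. unfold hh. destruct (Req_EM_T 0 0); [|lra]. rewrite Rabs_R0. lra.
  - rewrite (Rabs_pos_eq x) by lra. apply hh_pos_bound. rewrite Rabs_pos_eq in Hx; lra.
Qed.

Lemma hh_cont0 : continuity_pt (hh a) 0.
Proof.
  unfold continuity_pt, continue_in, limit1_in, limit_in. intros eps Heps.
  exists (Rmin 1 eps). split. apply Rmin_pos; lra.
  intros x [_ Hd]. simpl in *. unfold R_dist in *. rewrite Rminus_0_r in Hd.
  unfold hh at 2. destruct (Req_EM_T 0 0); [|lra]. rewrite Rminus_0_r.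
  eapply Rle_lt_trans. apply hh_bound. pose proof (Rmin_l 1 eps); lra.
  pose proof (Rmin_r 1 eps); lra.
Qed.

Lemma hh_cont x : 0 <= x <= PI -> continuity_pt (hh a) x.
Proof.
  intros Hx. destruct (Req_dec x 0) as [->|Hx0]. apply hh_cont0.
  assert (Hs : 0 < sin (x / 2)) by (apply sin_gt_0; pose proof PI_RGT_0; lra).
  apply (continuity_pt_ext_loc (fun y => (cos (a * y) - 1) / (2 * sin (y / 2)))).
  - assert (Hxp : 0 < x) by lra. exists (mkposreal x Hxp). intros y Hy.
    unfold ball in Hy; simpl in Hy. unfold AbsRing_ball, abs, minus, plus, opp in Hy; simpl in Hy.
    apply Rabs_lt_between in Hy. unfold hh. destruct (Req_EM_T y 0); [lra|reflexivity].
  - apply continuity_pt_filterlim. apply (contR (fun y => (cos (a * y) - 1) / (2 * sin (y / 2))) x). auto_derive. lra.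
Qed.

Lemma Lid N : RInt (fun x => hh a x * sin ((INR N + 1 / 2) * x)) 0 PI = sin (a * PI) / 2 * SN a N - PI / 2.
Proof.
  rewrite (RInt_ext _ (fun x => cos (a * x) * Dk N x - Dk N x)).
  - rewrite (RInt_minus (V:=R_CompleteNormedModule) (fun x => cos (a * x) * Dk N x) (Dk N)).
    + unfold minus, plus, opp; simpl. rewrite L2, L3 by auto. rq; ring.
    + apply ex_RInt_of_cont. intros; apply cont_cosD.
    + apply ex_RInt_of_cont. intros; apply cont_Dk.
  - intros x Hx. rewrite Rmin_left, Rmax_right in Hx by (pose proof PI_RGT_0; lra).
    assert (Hs : 0 < sin (x / 2)) by (apply sin_gt_0; lra).
    rewrite <- Dk_sin. unfold hh. destruct (Req_EM_T x 0); [lra|]. rq; field. lra.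
Qed.

Lemma D7 eps : 0 < eps -> exists N0, forall N, (N0 <= N)%nat -> SN a N <= PI / sin (a * PI) + eps.
Proof.
  intros Heps.
  assert (Hsin : 0 < sin (a * PI)) by (apply sin_gt_0; pose proof PI_RGT_0; nra).
  destruct (RL (hh a) PI PI_RGT_0 (fun x Hx => hh_cont x Hx) (eps * sin (a * PI) / 2)) as [M0 HM0].
  { apply Rmult_lt_0_compat. nra. lra. }
  destruct (INR_archimed 1 M0 ltac:(lra)) as [N0 HN0].
  exists N0. intros N HN. apply le_INR in HN.
  pose proof (HM0 (INR N + 1 / 2) ltac:(lra)) as H. rewrite Lid in H.
  apply Rabs_le_between in H.
  apply Rmult_le_reg_r with (sin (a * PI) / 2). lra.
  replace ((PI / sin (a * PI) + eps) * (sin (a * PI) / 2)) with (PI / 2 + eps * sin (a * PI) / 2) by (field; lra).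
  lra.
Qed.

End HH.

Section J.
Variable p : R.
Hypothesis Hp : 1 < p.
Let a := 1 / p.

Lemma sum_relation m :
  sum_f_R0 (fun n => (-1) ^ n / (INR n * p + 1)) m + sum_f_R0 (fun n => (-1) ^ n / (INR n * p + p - 1)) m
  = a * (SN a m + (-1) ^ m / (INR m + 1 - a)).
Proof.
  assert (Ha : 0 < a < 1) by (apply (Ha p Hp)).
  assert (Hpa : p = / a) by (unfold a; field; lra).
  induction m.
  - simpl. rewrite Hpa. field. split; lra.
  - rewrite !tech5.
    replace (sum_f_R0 (fun n => (-1) ^ n / (INR n * p + 1)) m + (-1) ^ S m / (INR (S m) * p + 1) +
      (sum_f_R0 (fun n => (-1) ^ n / (INR n * p + p - 1)) m + (-1) ^ S m / (INR (S m) * p + p - 1)))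
      with ((sum_f_R0 (fun n => (-1) ^ n / (INR n * p + 1)) m + sum_f_R0 (fun n => (-1) ^ n / (INR n * p + p - 1)) m)
         + (-1) ^ S m / (INR (S m) * p + 1) + (-1) ^ S m / (INR (S m) * p + p - 1)) by ring.
    rewrite IHm. cbn [SN]. change ((-1) ^ S m) with (-1 * (-1) ^ m).
    set (s := (-1) ^ m). rewrite S_INR. pose proof (pos_INR m) as Hm.
    rewrite Hpa.
    replace ((INR m + 1) * / a + 1) with ((INR m + 1 + a) / a) by (field; lra).
    replace ((INR m + 1) * / a + / a - 1) with ((INR m + 2 - a) / a) by (field; lra).
    field. repeat split; try lra; nra.
Qed.

Lemma BK_nonneg K : 0 <= BK p K.
Proof.
  unfold BK. eapply Rle_trans; [|apply (alt_sum_ge (fun n => / (INR n * p + p - 1)))].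
  - left. apply Rinv_0_lt_compat. pose proof (pos_INR (2 * K)). nra.
  - intros n. pose proof (pos_INR n). rewrite S_INR. split.
    left. apply Rinv_0_lt_compat. nra.
    apply Rinv_le_contravar. nra. nra.
Qed.

Lemma ex_f u v : ex_RInt (fun t => / (1 + rpow t p)) u v.
Proof. apply (ex_RInt_continuous (V:=R_CompleteNormedModule)). intros; apply cont_f; auto. Qed.

Lemma arctan_le_K Y K : 0 <= Y -> arctan_p p Y <= AK p K + BK p K.
Proof.
  intros HY. pose proof (BK_nonneg K). pose proof (bound_01 p Hp K).
  unfold arctan_p in *.
  destruct (Rle_dec 1 Y) as [H1|H1].
  - rewrite <- (RInt_Chasles (V:=R_CompleteNormedModule) _ 0 1 Y) by apply ex_f.
    pose proof (bound_1Y p Hp K Y H1). unfold plus; simpl. lra.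
  - rewrite <- (RInt_Chasles (V:=R_CompleteNormedModule) _ 0 Y 1) in H0 by apply ex_f.
    unfold plus in H0; simpl in H0.
    assert (0 <= RInt (fun t => / (1 + rpow t p)) Y 1).
    { replace 0 with (RInt (fun _ => 0) Y 1).
      apply RInt_le. lra. apply (ex_RInt_const (V:=R_CompleteNormedModule)). apply ex_f.
      intros t _. left. apply Rinv_0_lt_compat. pose proof (rpow_ge0 t p); lra.
      rewrite RInt_const. unfold scal; simpl; unfold mult; simpl. ring. }
    lra.
Qed.

Lemma arctan_bound_all Y : 0 <= Y -> arctan_p p Y <= PI / (p * sin (PI / p)).
Proof.
  intros HY. assert (Ha : 0 < a < 1) by (apply (Ha p Hp)).
  assert (HaPI : a * PI = PI / p) by (unfold a; field; lra).
  assert (Hsin : 0 < sin (PI / p)) by (rewrite <- HaPI; apply sin_gt_0; pose proof PI_RGT_0; nra).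
  apply Rle_plus_epsilon. intros eps Heps.
  set (e0 := eps * p / 2).
  assert (He0 : 0 < e0) by (unfold e0; nra).
  destruct (D7 a Ha e0 He0) as [N0 HN0].
  destruct (INR_archimed e0 1 He0) as [K1 HK1].
  set (K := max N0 K1).
  pose proof (arctan_le_K Y K HY) as HK.
  unfold AK, BK in HK. rewrite sum_relation in HK. rewrite pow_m1_even in HK.
  assert (HS : SN a (2 * K) <= PI / sin (a * PI) + e0) by (apply HN0; unfold K; lia).
  assert (HK1' : INR K1 <= INR K) by (apply le_INR; unfold K; lia).
  assert (HK2 : INR K <= INR (2 * K) + 1 - a) by (rewrite mult_INR; simpl; pose proof (pos_INR K); lra).
  assert (Hinv : 1 / (INR (2 * K) + 1 - a) <= e0).
  { assert (0 < INR K1) by (destruct K1; [simpl in HK1; lra| apply lt_0_INR; lia]).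
    apply Rmult_le_reg_r with (INR (2 * K) + 1 - a). lra.
    field_simplify; [|lra]. nra. }
  rewrite HaPI in HS.
  apply Rle_trans with (a * (PI / sin (PI / p) + 2 * e0)).
  - eapply Rle_trans; [apply HK|]. apply Rmult_le_compat_l; lra.
  - right. unfold a, e0. field. split; lra.
Qed.

End J.


Theorem theorem1p1 (p : R) (hp : 1 < p) :
  forall x : R, 0 < x < 1 ->
    ((1 + rpow x p / (p * (1 + p))) * x < arcsin_p p x
       /\ arcsin_p p x < pi_p p / 2 * x)
    /\ ((1 + (1 - rpow x p) / (p * (1 + p))) * rpow (1 - rpow x p) (1 / p)
          < arccos_p p x
       /\ arccos_p p x < pi_p p / 2 * rpow (1 - rpow x p) (1 / p))
    /\ ((p * (1 + p) * (1 + rpow x p) + rpow x p) * x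
          / (p * (1 + p) * rpow (1 + rpow x p) (1 + 1 / p)) < arctan_p p x
       /\ arctan_p p x
          < rpow 2 (1 / p) * b_p p * rpow (rpow x p / (1 + rpow x p)) (1 / p)).
Proof.
  intros x Hx.
  pose proof (arctan_bound_all p hp) as S7.
  split; [|split].
  - apply (part1 p hp S7 x Hx).
  - apply (part2 p hp S7 x Hx).
  - apply (part3 p hp x Hx).
Qed.
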